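(* In the standing setting, let $((\psi_n,\alpha_n):n\ge1)$ be a sequence of elements of $\mathcal{A}\times\mathcal{B}$, and for each $n$ fix a lifting $\psi_n^\uparrow$ of $\psi_n$. Set $\circ_0=\cdot$ and, recursively for $n\ge1$, $$g\circ_n h=g\circ_{n-1}\psi_n^{\uparrow}(g)\circ_{n-1}h\circ_{n-1}\overline{\psi_n^{\uparrow}(g)}\circ_{n-1}\alpha_n(g,h),$$ where $\overline{z}$ denotes the inverse of $z$ with respect to $\circ_{n-1}$. Let $\xi_n=\sum_{\emptyset\ne S\subseteq\{1,\dots,n\}}\prod_{j\in S}\psi_j\in\mathcal{A}$ (ring operations of $\mathcal{A}$, each product taken in increasing order of the indices, e.g. $\psi_1\psi_2$ means $\psi_1\circ\psi_2$), so that $\xi_1=\psi_1$ and $\xi_n=\xi_{n-1}+\psi_n+\xi_{n-1}\psi_n$; and let $q_n$ be a lifting of $\xi_n$ (for instance $q_n=\sum_{\emptyset\ne S}\prod_{j\in S}\psi_j^\uparrow$ with pointwise products and compositions of maps). Then for every $n\ge1$ each $\circ_n$ is a well-defined group operation on $G$ and there exists $\beta_n\in\mathcal{B}$ such that for all $g,h\in G$ $$g\circ_n h=g\cdot q_n(g)\cdot h\cdot q_n(g)^{-1}\cdot\beta_n(g,h),$$ i.e. $\circ_n=\circ_{\xi_n,\beta_n}$. In particular $(G,\cdot,\circ_n)$ is a bi-skew brace for all $n\ge 1$.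
   Context: Standing setting: $(G,\cdot)$ is a group, $K$ is a subgroup of $G$ contained in the centre $Z(G)$, and $A$ is a subgroup with $K\le A\le G$ and $A/K$ abelian. Let $\mathcal{A}=\{\psi\in\operatorname{End}(G/K):\psi(G/K)\le A/K\}$; it is a ring with $(\psi+\phi)(x)=\psi(x)\phi(x)$ and $(\psi\phi)(x)=\psi(\phi(x))$. A lifting of $\psi\in\mathcal{A}$ is any set map $\psi^{\uparrow}:G\to A$ with $\psi^{\uparrow}(g)K=\psi(gK)$ for all $g\in G$. Let $\mathcal{B}$ be the set of maps $\alpha:G\times G\to K$ that are bilinear, i.e. $\alpha(gh,k)=\alpha(g,k)\alpha(h,k)$ and $\alpha(g,hk)=\alpha(g,h)\alpha(g,k)$, and satisfy $\alpha(k,g)=\alpha(g,k)=1$ for all $k\in K$, $g\in G$. For $(\psi,\alpha)\in\mathcal{A}\times\mathcal{B}$ define $g\circ_{\psi,\alpha}h=g\cdot\psi^{\uparrow}(g)\cdot h\cdot\psi^{\uparrow}(g)^{-1}\cdot\alpha(g,h)$ (independent of the lifting). A skew brace is a triple $(G,\cdot,\circ)$ where $(G,\cdot)$ and $(G,\circ)$ are groups and $g\circ(h\cdot k)=(g\circ h)\cdot g^{-1}\cdot(g\circ k)$ for all $g,h,k$. A bi-skew brace is a triple $(G,\cdot,\circ)$ such that both $(G,\cdot,\circ)$ and $(G,\circ,\cdot)$ are skew braces. *)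

(* Defs.v *)
From Stdlib Require Import List ClassicalEpsilon.
Import ListNotations.
Set Implicit Arguments.

Section Setting.
Variable T : Type.

Definition is_group (o : T -> T -> T) (u : T) (iv : T -> T) : Prop :=
  (forall x y z, o (o x y) z = o x (o y z)) /\
  (forall x, o u x = x /\ o x u = x) /\
  (forall x, o (iv x) x = u /\ o x (iv x) = u).

Definition is_group_op (o : T -> T -> T) : Prop :=
  exists u iv, is_group o u iv.

Definition skew_brace (o1 o2 : T -> T -> T) : Prop :=
  is_group_op o2 /\
  exists u iv, is_group o1 u iv /\
    forall g h k, o2 g (o1 h k) = o1 (o1 (o2 g h) (iv g)) (o2 g k).

Definition bi_skew_brace (o1 o2 : T -> T -> T) : Prop :=
  skew_brace o1 o2 /\ skew_brace o2 o1.

(* inverse of z with respect to an operation o (chosen classically;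
   meaningful when o is a group operation) *)
Definition op_inv (o : T -> T -> T) (z : T) : T :=
  epsilon (inhabits z)
    (fun y => exists u, (forall x, o u x = x /\ o x u = x) /\ o z y = u /\ o y z = u).

Variables (mul : T -> T -> T) (e : T) (inv : T -> T).

Definition is_subgroup (H : T -> Prop) : Prop :=
  H e /\ (forall x y, H x -> H y -> H (mul x y)) /\ (forall x, H x -> H (inv x)).

Definition central (K : T -> Prop) : Prop :=
  forall k g, K k -> mul k g = mul g k.

Variables (K A : T -> Prop).

Definition congK (x y : T) : Prop := K (mul (inv x) y).

Definition abelian_mod (A : T -> Prop) : Prop :=
  forall a b, A a -> A b -> congK (mul a b) (mul b a).

(* f : G -> A is a lifting of an element of
   calA = { psi in End(G/K) | psi(G/K) <= A/K }, namely of gK |-> f(g)K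
   (which must be a well-defined endomorphism of G/K). *)
Definition is_calA_lifting (f : T -> T) : Prop :=
  (forall g, A (f g)) /\
  (forall g k, K k -> congK (f (mul g k)) (f g)) /\
  (forall g h, congK (f (mul g h)) (mul (f g) (f h))).

(* q is a lifting of the element of calA represented by the lifting f *)
Definition lifts (q f : T -> T) : Prop :=
  (forall g, A (q g)) /\ (forall g, congK (q g) (f g)).

Definition is_calB (al : T -> T -> T) : Prop :=
  (forall g h, K (al g h)) /\
  (forall g h k, al (mul g h) k = mul (al g k) (al h k)) /\
  (forall g h k, al g (mul h k) = mul (al g h) (al g k)) /\
  (forall k g, K k -> al k g = e /\ al g k = e).

(* ring operations of calA at the level of representatives *)
Definition fadd (f1 f2 : T -> T) : T -> T := fun x => mul (f1 x) (f2 x).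
Definition fzero : T -> T := fun _ => e.

Fixpoint subsets (l : list nat) : list (list nat) :=
  match l with
  | [] => [[]]
  | x :: l' => map (cons x) (subsets l') ++ subsets l'
  end.

Variable psi : nat -> T -> T.

(* prod_{j in S} psi_j, in increasing index order: psi_{j1} o psi_{j2} o ... *)
Definition prod_psi (S : list nat) : T -> T :=
  fold_right (fun j f => fun x => psi j (f x)) (fun x => x) S.

Definition xi (n : nat) : T -> T :=
  fold_right fadd fzero
    (map prod_psi (filter (fun S => match S with [] => false | _ => true end)
                          (subsets (seq 1 n)))).

Variable alpha : nat -> T -> T -> T.

Fixpoint circ (n : nat) : T -> T -> T :=
  match n with
  | 0 => mul
  | S m => fun g h =>
      let o := circ m in
      o (o (o (o g (psi (S m) g)) h) (op_inv o (psi (S m) g))) (alpha (S m) g h)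
  end.

End Setting.

(* Main.v *)
Require Import Defs.
From Stdlib Require Import List Permutation Setoid Morphisms FunctionalExtensionality ClassicalEpsilon PeanoNat Lia.
Import ListNotations.

Lemma op_inv_group (T : Type) (o : T -> T -> T) u iv :
  is_group o u iv -> forall z, op_inv o z = iv z.
Proof.
  intros [Has [Hid Hinv]] z. unfold op_inv.
  set (P := fun y => exists u, (forall x, o u x = x /\ o x u = x) /\ o z y = u /\ o y z = u).
  assert (Hex : exists y, P y).
  { exists (iv z), u. split; [exact Hid|]. destruct (Hinv z); auto. }
  pose proof (epsilon_spec (inhabits z) P Hex) as Hs.
  set (y := epsilon _ _) in *.
  destruct Hs as [u' [Hu' [H1 H2]]].
  assert (Eu : u' = u).
  { transitivity (o u' u). symmetry; apply (proj2 (Hid u')). apply (proj1 (Hu' u)). }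
  rewrite Eu in H1.
  transitivity (o u y). symmetry; apply Hid.
  rewrite <- (proj1 (Hinv z)), Has, H1. apply Hid.
Qed.

Section Grp.
Context (T : Type) (mul : T -> T -> T) (e : T) (inv : T -> T) (K A : T -> Prop).
Hypothesis HG : is_group mul e inv.
Hypothesis HK : is_subgroup mul e inv K.
Hypothesis HKZ : central mul K.
Hypothesis HA : is_subgroup mul e inv A.
Hypothesis HKA : forall x, K x -> A x.
Hypothesis HAab : abelian_mod mul inv K A.

Local Infix "**" := mul (at level 40, left associativity).
Local Notation cK := (congK mul inv K).

Lemma assoc x y z : x ** y ** z = x ** (y ** z).
Proof. apply (proj1 HG). Qed.
Lemma mul_e_l x : e ** x = x. Proof. apply (proj1 (proj2 HG)). Qed.
Lemma mul_e_r x : x ** e = x. Proof. apply (proj1 (proj2 HG)). Qed.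
Lemma inv_l x : inv x ** x = e. Proof. apply (proj2 (proj2 HG)). Qed.
Lemma inv_r x : x ** inv x = e. Proof. apply (proj2 (proj2 HG)). Qed.
Lemma inv_l' x y : inv x ** (x ** y) = y.
Proof. rewrite <- assoc, inv_l, mul_e_l; auto. Qed.
Lemma inv_r' x y : x ** (inv x ** y) = y.
Proof. rewrite <- assoc, inv_r, mul_e_l; auto. Qed.
Lemma inv_unique x y : x ** y = e -> y = inv x.
Proof. intro H. rewrite <- (inv_l' x y), H, mul_e_r; auto. Qed.
Lemma inv_mul x y : inv (x ** y) = inv y ** inv x.
Proof. symmetry; apply inv_unique. rewrite assoc, inv_r', inv_r; auto. Qed.
Lemma inv_inv x : inv (inv x) = x.
Proof. symmetry; apply inv_unique, inv_l. Qed.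
Lemma inv_e : inv e = e.
Proof. symmetry; apply inv_unique, mul_e_l. Qed.
Lemma mul_cancel_l x y z : x ** y = x ** z -> y = z.
Proof. intro H. rewrite <- (inv_l' x y), H, inv_l'; auto. Qed.

Ltac gnorm := repeat (rewrite ?assoc, ?mul_e_l, ?mul_e_r, ?inv_l', ?inv_r', ?inv_l, ?inv_r, ?inv_mul, ?inv_inv, ?inv_e).

Lemma K_e : K e. Proof. apply HK. Qed.
Lemma K_mul x y : K x -> K y -> K (x ** y). Proof. apply HK. Qed.
Lemma K_inv x : K x -> K (inv x). Proof. apply HK. Qed.
Lemma A_e : A e. Proof. apply HA. Qed.
Lemma A_mul x y : A x -> A y -> A (x ** y). Proof. apply HA. Qed.
Lemma A_inv x : A x -> A (inv x). Proof. apply HA. Qed.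
Lemma cen k g : K k -> k ** g = g ** k. Proof. intro; apply HKZ; auto. Qed.
Lemma cen' k g h : K k -> k ** (g ** h) = g ** (k ** h).
Proof. intro. rewrite <- assoc, (cen k g), assoc; auto. Qed.

Lemma cK_refl x : cK x x. Proof. unfold congK. rewrite inv_l. apply K_e. Qed.
Lemma cK_sym x y : cK x y -> cK y x.
Proof. unfold congK. intro H. apply K_inv in H. rewrite inv_mul, inv_inv in H; auto. Qed.
Lemma cK_trans x y z : cK x y -> cK y z -> cK x z.
Proof. unfold congK. intros H1 H2. pose proof (K_mul _ _ H1 H2) as H.
  rewrite assoc, inv_r' in H; auto. Qed.

Global Instance cK_Equiv : Equivalence cK.
Proof. split; red; [apply cK_refl|apply cK_sym|apply cK_trans]. Qed.

Lemma cK_iff x y : cK x y <-> exists k, K k /\ y = x ** k.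
Proof. split. intro H. exists (inv x ** y); split; auto. rewrite inv_r'; auto.
  intros [k [Hk ->]]. unfold congK. rewrite inv_l'; auto. Qed.
Lemma cK_Kr x k : K k -> cK x (x ** k).
Proof. intro; apply cK_iff; eauto. Qed.
Lemma cK_Kl x k : K k -> cK x (k ** x).
Proof. intro; rewrite cen; auto; apply cK_Kr; auto. Qed.
Lemma cK_K k : K k -> cK k e.
Proof. intro. unfold congK. rewrite mul_e_r. apply K_inv; auto. Qed.

Global Instance mul_Proper : Proper (cK ==> cK ==> cK) mul.
Proof.
  intros x x' Hx y y' Hy. apply cK_iff in Hx as [k [Hk ->]]. apply cK_iff in Hy as [l [Hl ->]].
  apply cK_iff. exists (k ** l). split. apply K_mul; auto.
  rewrite !assoc. f_equal. rewrite cen'; auto.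
Qed.
Global Instance inv_Proper : Proper (cK ==> cK) inv.
Proof.
  intros x x' Hx. apply cK_iff in Hx as [k [Hk ->]]. apply cK_iff.
  exists (inv k). split. apply K_inv; auto. rewrite inv_mul, cen; auto. apply K_inv; auto.
Qed.

Lemma A_cK x y : cK x y -> A x -> A y.
Proof. intros H Hx. apply cK_iff in H as [k [Hk ->]]. apply A_mul; auto. Qed.
Lemma K_cK x y : cK x y -> K x -> K y.
Proof. intros H Hx. apply cK_iff in H as [k [Hk ->]]. apply K_mul; auto. Qed.
Lemma cK_e_K x : cK x e -> K x.
Proof. intro H. apply cK_sym in H. exact (K_cK _ _ H K_e). Qed.

Lemma Acomm a b : A a -> A b -> cK (a ** b) (b ** a).
Proof. apply HAab. Qed.

Lemma conj_cK a b h : cK a b -> a ** h ** inv a = b ** h ** inv b.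
Proof. intro H. apply cK_iff in H as [k [Hk ->]]. rewrite inv_mul.
  rewrite !assoc. f_equal. rewrite cen', inv_r'; auto. Qed.

Lemma conjA a x : A a -> A x -> cK (a ** x ** inv a) x.
Proof. intros Ha Hx. rewrite (Acomm a x Ha Hx). rewrite assoc, inv_r, mul_e_r. reflexivity. Qed.


Fixpoint prodl (l : list T) : T :=
  match l with
  | [] => e
  | [a] => a
  | a :: l' => a ** prodl l'
  end.

Lemma prodl_cons a l : prodl (a :: l) = a ** prodl l.
Proof. destruct l; simpl; auto. rewrite mul_e_r; auto. Qed.

Lemma Forall_perm (P : T -> Prop) l1 l2 : Forall P l1 -> Permutation l1 l2 -> Forall P l2.
Proof. intros H Hp. rewrite Forall_forall in *. intros x Hx. apply H.
  eapply Permutation_in; [symmetry; eauto| auto]. Qed.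

Lemma prodl_perm_K l1 l2 : Forall K l1 -> Permutation l1 l2 -> prodl l1 = prodl l2.
Proof.
  intros HF Hp. induction Hp.
  - auto.
  - rewrite !prodl_cons. inversion HF; subst. f_equal; auto.
  - rewrite !prodl_cons. inversion HF; subst. inversion H2; subst.
    rewrite <- !assoc. f_equal. apply cen; auto.
  - rewrite IHHp1; auto. apply IHHp2. eapply Forall_perm; eauto.
Qed.

Lemma prodl_perm_A l1 l2 : Forall A l1 -> Permutation l1 l2 -> cK (prodl l1) (prodl l2).
Proof.
  intros HF Hp. induction Hp.
  - reflexivity.
  - rewrite !prodl_cons. inversion HF; subst. rewrite IHHp; auto. reflexivity.
  - rewrite !prodl_cons. inversion HF; subst. inversion H2; subst.
    rewrite <- !assoc. rewrite (Acomm y x); auto. reflexivity.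
  - rewrite IHHp1; auto. apply IHHp2. eapply Forall_perm; eauto.
Qed.

Create HintDb kdb.
#[local] Hint Resolve K_e K_mul K_inv : kdb.

Ltac reify t :=
  match t with
  | ?a ** ?b => let l := reify b in constr:(a :: l)
  | ?a => constr:([a])
  end.

Ltac split_at a r :=
  match r with
  | a :: ?t => constr:((@nil T, t))
  | ?b :: ?t => let p := split_at a t in constr:((b :: fst p, snd p))
  end.

Ltac perm_solve :=
  repeat match goal with
  | |- Permutation [] [] => apply perm_nil
  | |- Permutation (?a :: ?l) ?r =>
      let p := split_at a r in
      let l1 := eval cbn [fst snd] in (fst p) in
      let l2 := eval cbn [fst snd] in (snd p) in
      apply (@Permutation_cons_app T l l1 l2 a); cbn [app]
  end.

Lemma prodl_cancel_eq l l' a : Forall K l -> Permutation l (a :: inv a :: l') -> prodl l = prodl l'.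
Proof. intros HF Hp. rewrite (prodl_perm_K _ _ HF Hp). rewrite !prodl_cons. rewrite inv_r'. auto. Qed.

Ltac kcancel_r :=
  match goal with |- prodl ?l1 = prodl ?l2 =>
  match l2 with context [inv ?a] =>
    let p := split_at (inv a) l2 in let r1 := eval cbn [fst snd app] in (fst p ++ snd p) in
    let q := split_at a r1 in let r2 := eval cbn [fst snd app] in (fst q ++ snd q) in
    transitivity (prodl r2); [| symmetry; apply (prodl_cancel_eq l2 r2 a); [repeat constructor; auto with kdb | perm_solve]]
  end end.
Ltac kcancel_l := symmetry; kcancel_r; symmetry.

Ltac kperm :=
  repeat rewrite assoc;
  match goal with |- ?l = ?r =>
    let l1 := reify l in let l2 := reify r in
    change (prodl l1 = prodl l2); repeat kcancel_r; repeat kcancel_l;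
    apply prodl_perm_K; [repeat constructor; auto with kdb | perm_solve]
  end.

Ltac aperm :=
  repeat rewrite assoc;
  match goal with |- cK ?l ?r =>
    let l1 := reify l in let l2 := reify r in
    change (cK (prodl l1) (prodl l2)); apply prodl_perm_A; [repeat constructor; auto with kdb | perm_solve]
  end.

Lemma test_kperm a b c : K a -> K b -> K c -> a ** b ** c = c ** (a ** b).
Proof. intros. kperm. Qed.

Definition comm x y := x ** y ** inv x ** inv y.

Lemma comm_K x y : A x -> A y -> K (comm x y).
Proof.
  intros Hx Hy. pose proof (Acomm y x Hy Hx) as H. apply cK_iff in H as [k [Hk Hk']].
  unfold comm. rewrite Hk'. gnorm. rewrite (cen k); auto. gnorm. auto.
Qed.

Lemma comm_swap x y : comm x y = inv (comm y x).
Proof. unfold comm. gnorm. auto. Qed.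
Lemma comm_e_l y : comm e y = e.
Proof. unfold comm. gnorm. auto. Qed.
Lemma comm_e_r y : comm y e = e.
Proof. unfold comm. gnorm. auto. Qed.
Lemma comm_congl x x' y : cK x x' -> comm x y = comm x' y.
Proof. intro H. apply cK_iff in H as [k [Hk ->]]. unfold comm. gnorm.
  rewrite (cen' k y); auto. gnorm. auto. Qed.
Lemma comm_congr x y y' : cK y y' -> comm x y = comm x y'.
Proof. intro H. apply cK_iff in H as [k [Hk ->]]. unfold comm. gnorm.
  rewrite (cen' k (inv x)); auto. gnorm. auto. Qed.
Lemma comm_move x y R : x ** (y ** (inv x ** R)) = comm x y ** (y ** R).
Proof. unfold comm. gnorm. auto. Qed.
Lemma comm_mull x x' y : A x -> A x' -> A y -> comm (x ** x') y = comm x' y ** comm x y.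
Proof. intros Hx Hx' Hy. unfold comm at 1. gnorm. rewrite comm_move.
  rewrite <- cen'; [|apply comm_K; auto]. unfold comm. gnorm. auto. Qed.
Lemma comm_mulr x y y' : A x -> A y -> A y' -> comm x (y ** y') = comm x y ** comm x y'.
Proof. intros Hx Hy Hy'. rewrite !(comm_swap x). rewrite comm_mull; auto. rewrite inv_mul. auto. Qed.
Lemma comm_Kl k y : K k -> comm k y = e.
Proof. intro. rewrite (comm_congl k e). apply comm_e_l. apply cK_K; auto. Qed.
Lemma comm_Kr k y : K k -> comm y k = e.
Proof. intro. rewrite (comm_congr y k e). apply comm_e_r. apply cK_K; auto. Qed.

Section Lift.
Variable f : T -> T.
Hypothesis Hf : is_calA_lifting mul inv K A f.
Lemma fA x : A (f x). Proof. apply Hf. Qed.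
Lemma f_mul x y : cK (f (x ** y)) (f x ** f y). Proof. apply Hf. Qed.
Lemma f_cong x y : cK x y -> cK (f x) (f y).
Proof. intro H. apply cK_iff in H as [k [Hk ->]]. symmetry. apply Hf; auto. Qed.
Lemma f_e : K (f e).
Proof. pose proof (f_mul e e) as H. rewrite mul_e_l in H. unfold congK in H.
  rewrite inv_l' in H. auto. Qed.
Lemma f_Kel k : K k -> cK (f k) e.
Proof. intro Hk. transitivity (f e). apply f_cong. rewrite <- (mul_e_l k) at 1.
  symmetry. apply cK_Kr; auto. apply cK_K, f_e. Qed.
Global Instance f_Proper : Proper (cK ==> cK) f.
Proof. intros x y H. apply f_cong; auto. Qed.
End Lift.

Section Bil.
Variable b : T -> T -> T.
Hypothesis Hb : is_calB mul e K b.
Lemma bK g h : K (b g h). Proof. apply Hb. Qed.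
Lemma b_mull g h k : b (g ** h) k = b g k ** b h k. Proof. apply Hb. Qed.
Lemma b_mulr g h k : b g (h ** k) = b g h ** b g k. Proof. apply Hb. Qed.
Lemma b_Kl k g : K k -> b k g = e. Proof. intro H; apply (proj2 (proj2 (proj2 Hb)) k g H). Qed.
Lemma b_Kr k g : K k -> b g k = e. Proof. intro H; apply (proj2 (proj2 (proj2 Hb)) k g H). Qed.
Lemma b_congl g g' h : cK g g' -> b g h = b g' h.
Proof. intro H. apply cK_iff in H as [k [Hk ->]]. rewrite b_mull, (b_Kl k); auto. rewrite mul_e_r; auto. Qed.
Lemma b_congr g h h' : cK h h' -> b g h = b g h'.
Proof. intro H. apply cK_iff in H as [k [Hk ->]]. rewrite b_mulr, (b_Kr k); auto. rewrite mul_e_r; auto. Qed.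
Lemma b_invr g h : b g (inv h) = inv (b g h).
Proof. apply inv_unique. rewrite <- b_mulr, inv_r. apply b_Kr, K_e. Qed.
End Bil.

#[local] Hint Resolve K_e K_mul K_inv comm_K bK f_e fA A_mul A_inv A_e HKA : kdb.

Ltac floatK :=
  repeat match goal with
  | |- context [?k ** (?x ** ?y)] =>
      let Hk := fresh in assert (Hk : K k) by (auto with kdb);
      tryif (assert (K x) by (auto with kdb)) then fail else (rewrite (cen' k x y Hk); clear Hk)
  | |- context [?k ** ?x] =>
      lazymatch x with _ ** _ => fail | _ => idtac end;
      let Hk := fresh in assert (Hk : K k) by (auto with kdb);
      tryif (assert (K x) by (auto with kdb)) then fail else (rewrite (cen k x Hk); clear Hk)
  end.

Ltac strip := repeat match goal with |- ?x ** ?r = ?x ** ?r' => apply (f_equal (mul x)) end.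

Definition lam (Q : T -> T) (b : T -> T -> T) g h := Q g ** h ** inv (Q g) ** b g h.
Definition dot (Q : T -> T) (b : T -> T -> T) g h := g ** Q g ** h ** inv (Q g) ** b g h.

Section Lam.
Variables (Q : T -> T) (b : T -> T -> T).
Hypothesis HQ : is_calA_lifting mul inv K A Q.
Hypothesis Hb : is_calB mul e K b.
#[local] Hint Resolve HQ Hb : kdb.
Local Notation lm := (lam Q b).
Local Notation dt := (dot Q b).

Lemma dot_lam g h : dt g h = g ** lm g h.
Proof. unfold dot, lam. gnorm. auto. Qed.

Lemma lam_hom g h h' : lm g (h ** h') = lm g h ** lm g h'.
Proof. unfold lam. rewrite (b_mulr b Hb). gnorm. floatK. gnorm. auto. Qed.

Lemma lam_e g : lm g e = e.
Proof. unfold lam. rewrite (b_Kr b Hb e); auto with kdb. gnorm. auto. Qed.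

Lemma lam_inv g h : lm g (inv h) = inv (lm g h).
Proof. apply inv_unique. rewrite <- lam_hom, inv_r. apply lam_e. Qed.

Lemma lam_K g k : K k -> lm g k = k.
Proof. intro Hk. unfold lam. rewrite (b_Kr b Hb k); auto. gnorm. rewrite (cen k); auto. gnorm. auto. Qed.

Lemma lam_ext g g' h : cK (Q g) (Q g') -> (forall h, b g h = b g' h) -> lm g h = lm g' h.
Proof. intros H1 H2. unfold lam. rewrite (conj_cK _ _ h H1), H2. auto. Qed.

Lemma lam_mul g g' h : lm (g ** g') h = lm g (lm g' h).
Proof.
  unfold lam. rewrite (conj_cK _ (Q g ** Q g') h (f_mul Q HQ g g')).
  rewrite (b_mull b Hb), !(b_mulr b Hb), (b_invr b Hb), (b_Kr b Hb (b g' h)); auto with kdb.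
  gnorm. floatK. gnorm. strip. kperm.
Qed.
Lemma lam_comm g g' h : lm (g ** g') h = lm (g' ** g) h.
Proof.
  apply lam_ext.
  - rewrite (f_mul Q HQ g g'), (f_mul Q HQ g' g). apply Acomm; auto with kdb.
  - intro h0. rewrite !(b_mull b Hb). apply cen; auto with kdb.
Qed.

Lemma lam_Kg k h : K k -> lm k h = h.
Proof. intro Hk. unfold lam. rewrite (conj_cK _ e h (f_Kel Q HQ k Hk)), (b_Kl b Hb k); auto.
  gnorm. auto. Qed.

Lemma lam_e_l h : lm e h = h.
Proof. apply lam_Kg, K_e. Qed.

Lemma lam_swap g g' h : lm g (lm g' h) = lm g' (lm g h).
Proof. rewrite <- !lam_mul. apply lam_comm. Qed.

Lemma lam_lam x y z : lm (lm x y) z = lm y z.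
Proof.
  assert (E : lm x y = Q x ** y ** inv (Q x) ** b x y) by reflexivity. rewrite E. rewrite !lam_mul. rewrite (lam_Kg (b x y)); auto with kdb.
  rewrite (lam_swap y). rewrite <- lam_mul, inv_r, lam_e_l. auto.
Qed.

Lemma dot_assoc x y z : dt (dt x y) z = dt x (dt y z).
Proof. rewrite !dot_lam. rewrite lam_mul, lam_lam, lam_hom. gnorm. auto. Qed.
Lemma dot_e_l h : dt e h = h.
Proof. rewrite dot_lam, lam_e_l, mul_e_l. auto. Qed.
Lemma dot_e_r h : dt h e = h.
Proof. rewrite dot_lam, lam_e, mul_e_r. auto. Qed.

Definition dinv g := lm (inv g) (inv g).
Lemma dot_inv_r g : dt g (dinv g) = e.
Proof. unfold dinv. rewrite dot_lam, <- lam_mul, inv_r, lam_e_l, inv_r. auto. Qed.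
Lemma dot_inv_l g : dt (dinv g) g = e.
Proof. unfold dinv. rewrite dot_lam, lam_lam, <- lam_hom, inv_l, lam_e. auto. Qed.

Lemma dot_group : is_group dt e dinv.
Proof. split; [|split]; intros.
  apply dot_assoc. split; [apply dot_e_l|apply dot_e_r]. split; [apply dot_inv_l|apply dot_inv_r]. Qed.

Lemma op_inv_dot z : op_inv dt z = dinv z.
Proof. apply (op_inv_group _ _ _ _ dot_group). Qed.

Lemma mul_group : is_group mul e inv.
Proof. exact HG. Qed.

Lemma bsb : bi_skew_brace mul dt.
Proof.
  split; split.
  - exists e, dinv. apply dot_group.
  - exists e, inv. split; [exact HG|]. intros g h k.
    rewrite !dot_lam, lam_hom. gnorm. auto.
  - exists e, inv. exact HG.
  - exists e, dinv. split; [apply dot_group|]. intros g h k.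
    assert (H1 : forall w, lm (g ** h) (lm (inv g) w) = lm h w).
    { intro w. rewrite lam_comm, lam_mul, <- (lam_mul g), inv_r, lam_e_l. auto. }
    rewrite dot_assoc. rewrite !dot_lam. unfold dinv. rewrite lam_lam, lam_hom, !H1.
    rewrite <- lam_hom. gnorm. auto.
Qed.

Section Comp.
Variables (phi : T -> T) (a' : T -> T -> T).
Hypothesis Hphi : is_calA_lifting mul inv K A phi.
Hypothesis Ha' : is_calB mul e K a'.
#[local] Hint Resolve Hphi Ha' : kdb.
#[local] Instance Qp : Proper (cK ==> cK) Q := f_Proper Q HQ.
#[local] Instance phip : Proper (cK ==> cK) phi := f_Proper phi Hphi.

Definition Q' g := phi g ** (Q g ** Q (phi g)).
Definition b' g h := b g h ** b (phi g) h ** comm (phi g) (Q h) ** inv (b h (phi g)) ** a' g h.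

Lemma Q'_calA : is_calA_lifting mul inv K A Q'.
Proof.
  unfold Q'. split; [|split].
  - intro g. auto with kdb.
  - intros g k Hk. assert (H : cK (g ** k) g) by (symmetry; apply cK_Kr; auto).
    rewrite H. reflexivity.
  - intros g h. rewrite (f_mul phi Hphi g h), (f_mul Q HQ g h), (f_mul Q HQ (phi g) (phi h)).
    aperm.
Qed.

Lemma b'_calB : is_calB mul e K b'.
Proof.
  unfold b'. split; [|split; [|split]].
  - intros g h. auto 10 with kdb.
  - intros g g' h.
    rewrite (b_congl b Hb (phi (g ** g')) (phi g ** phi g') h (f_mul phi Hphi g g')).
    rewrite (comm_congl (phi (g ** g')) (phi g ** phi g') _ (f_mul phi Hphi g g')).
    rewrite (b_congr b Hb h (phi (g ** g')) (phi g ** phi g') (f_mul phi Hphi g g')).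
    rewrite !(b_mull b Hb), (b_mulr b Hb), (b_mull a' Ha'), comm_mull; auto with kdb.
    gnorm. kperm.
  - intros g h h'.
    rewrite (comm_congr (phi g) (Q (h ** h')) (Q h ** Q h') (f_mul Q HQ h h')).
    rewrite !(b_mulr b Hb), (b_mull b Hb), (b_mulr a' Ha'), comm_mulr; auto with kdb.
    gnorm. kperm.
  - intros k g Hk. split.
    + rewrite (b_Kl b Hb k), (b_Kl a' Ha' k); auto.
      rewrite (b_congl b Hb (phi k) e g (f_Kel phi Hphi k Hk)), (b_Kl b Hb e); auto with kdb.
      rewrite (comm_congl (phi k) e _ (f_Kel phi Hphi k Hk)), comm_e_l.
      rewrite (b_congr b Hb g (phi k) e (f_Kel phi Hphi k Hk)), (b_Kr b Hb e); auto with kdb.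
      gnorm. auto.
    + rewrite (b_Kr b Hb k), (b_Kr a' Ha' k), (b_Kl b Hb k); auto.
      rewrite (b_Kr b Hb k); auto.
      rewrite (comm_congr (phi g) (Q k) e (f_Kel Q HQ k Hk)), comm_e_r.
      gnorm. auto.
Qed.

Lemma compose g h :
  dt (dt (dt (dt g (phi g)) h) (op_inv dt (phi g))) (a' g h) = dot Q' b' g h.
Proof.
  rewrite op_inv_dot. rewrite !dot_assoc.
  set (p := phi g). set (pb := dinv p).
  assert (Hpb : lm p pb = inv p).
  { apply inv_unique. rewrite <- dot_lam. apply dot_inv_r. }
  assert (Hp : A p) by (unfold p; auto with kdb).
  rewrite !dot_lam. rewrite !lam_hom.
  repeat rewrite (lam_K _ (a' g h)) by auto with kdb.
  rewrite (lam_swap p h pb), (lam_swap g h), Hpb, lam_inv, <- lam_mul.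
  set (P := lm g p).
  assert (HP : cK P p).
  { unfold P, lam. rewrite <- cK_Kr; auto with kdb. apply conjA; auto with kdb. }
  assert (E1 : lm (g ** p) h = Q (g ** p) ** h ** inv (Q (g ** p)) ** b (g ** p) h) by reflexivity.
  assert (E2 : lm h (inv P) = inv P ** comm P (Q h) ** b h (inv P)).
  { unfold lam at 1. unfold comm. gnorm. auto. }
  rewrite E1, E2. clear E1 E2.
  unfold dot, Q', b'. fold p.
  assert (HQ' : cK (p ** (Q g ** Q p)) (P ** Q (g ** p))).
  { rewrite HP, (f_mul Q HQ g p). reflexivity. }
  rewrite !(assoc g). rewrite (conj_cK _ _ h HQ').
  rewrite (b_mull b Hb), (comm_congl P p _ HP), (b_invr b Hb), (b_congr b Hb h P p HP).
  assert (A P) by (apply (A_cK p); [symmetry|]; auto).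
  gnorm. floatK. gnorm. strip. kperm.
Qed.
End Comp.

End Lam.

Section Xi.
Variable psi : nat -> T -> T.
Hypothesis Hpsi : forall n, 1 <= n -> is_calA_lifting mul inv K A (psi n).

Local Notation Sm L := (fold_right (fadd mul) (fzero e) L).
Definition ne (S : list nat) : bool := match S with [] => false | _ => true end.
Definition X l := Sm (map (prod_psi psi) (filter ne (subsets l))).

Lemma xi_X n : xi mul e psi n = X (seq 1 n).
Proof. reflexivity. Qed.

Lemma sum_app L1 L2 x : Sm (L1 ++ L2) x = Sm L1 x ** Sm L2 x.
Proof. induction L1; simpl; unfold fadd, fzero in *. rewrite mul_e_l; auto.
  rewrite IHL1, assoc. auto. Qed.

Lemma filter_ne_map_cons (a : nat) L : filter ne (map (cons a) L) = map (cons a) L.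
Proof. induction L; simpl; auto. rewrite IHL; auto. Qed.

Lemma sum_all l x : Sm (map (prod_psi psi) (subsets l)) x = X l x ** x.
Proof.
  induction l; unfold X in *.
  - simpl. unfold fadd, fzero. gnorm. auto.
  - cbn [subsets]. rewrite filter_app, filter_ne_map_cons, !map_app, !sum_app, IHl.
    rewrite assoc. auto.
Qed.

Lemma sum_comp a L x : 1 <= a ->
  cK (Sm (map (fun f => fun y => psi a (f y)) L) x) (psi a (Sm L x)).
Proof.
  intro Ha. induction L; simpl; unfold fadd, fzero in *.
  - symmetry. apply cK_K. apply (f_e (psi a)); auto.
  - rewrite IHL. symmetry. apply (f_mul (psi a)); auto.
Qed.

Lemma X_cons a l x : 1 <= a -> cK (X (a :: l) x) (psi a (X l x) ** psi a x ** X l x).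
Proof.
  intro Ha. unfold X at 1. cbn [subsets].
  rewrite filter_app, filter_ne_map_cons, map_app, sum_app.
  assert (E : map (prod_psi psi) (map (cons a) (subsets l)) =
              map (fun f => fun y => psi a (f y)) (map (prod_psi psi) (subsets l))).
  { rewrite !map_map. reflexivity. }
  rewrite E, sum_comp, sum_all by auto. fold (X l).
  rewrite (f_mul (psi a) (Hpsi a Ha)). reflexivity.
Qed.

Lemma sum_A L x : (forall f, In f L -> forall y, A (f y)) -> A (Sm L x).
Proof. induction L; simpl; unfold fadd, fzero; intros H. apply A_e.
  apply A_mul; auto. Qed.

Lemma subsets_incl l S : In S (subsets l) -> incl S l.
Proof.
  revert S; induction l; simpl; intros S H.
  - destruct H as [<-|[]]. apply incl_refl.
  - apply in_app_or in H as [H|H].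
    + apply in_map_iff in H as [S' [<- H]]. apply incl_cons. left; auto.
      apply incl_tl; auto.
    + apply incl_tl; auto.
Qed.

Lemma X_A l x : (forall j, In j l -> 1 <= j) -> A (X l x).
Proof.
  intro Hl. unfold X. apply sum_A. intros f Hf y.
  apply in_map_iff in Hf as [S [<- HS]]. apply filter_In in HS as [HS Hne].
  destruct S as [|j S]; [discriminate|]. simpl. apply (fA (psi j)). apply Hpsi, Hl.
  apply (subsets_incl l _ HS). left; auto.
Qed.

Lemma X_snoc l y : (forall j, In j l -> 1 <= j) -> 1 <= y ->
  forall x, cK (X (l ++ [y]) x) (X l x ** psi y x ** X l (psi y x)).
Proof.
  intros Hl Hy. induction l as [|a l IH]; intro x.
  - unfold X. simpl. unfold fadd, fzero. gnorm. reflexivity.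
  - assert (Ha : 1 <= a) by (apply Hl; left; auto).
    assert (Hl' : forall j, In j l -> 1 <= j) by (intros; apply Hl; right; auto).
    specialize (IH Hl').
    pose proof (Hpsi a Ha) as Hpa. pose proof (Hpsi y Hy) as Hpy.
    assert (Pa : Proper (cK ==> cK) (psi a)) by (apply f_Proper; auto).
    cbn [app]. rewrite X_cons by auto. rewrite (IH x).
    rewrite (X_cons a l x), (X_cons a l (psi y x)) by auto.
    rewrite !(f_mul (psi a) Hpa).
    assert (A (X l x)) by (apply X_A; auto).
    assert (A (X l (psi y x))) by (apply X_A; auto).
    assert (A (psi y x)) by (apply (fA (psi y)); auto).
    assert (forall z, A (psi a z)) by (intro; apply (fA (psi a)); auto).
    aperm.
Qed.

Lemma xi_step m x :
  cK (xi mul e psi (S m) x) (xi mul e psi m x ** psi (S m) x ** xi mul e psi m (psi (S m) x)).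
Proof.
  rewrite !xi_X. rewrite seq_S. apply X_snoc.
  - intros j Hj. apply in_seq in Hj. lia.
  - lia.
Qed.
End Xi.

Section Main.
Variables (psi : nat -> T -> T) (alpha : nat -> T -> T -> T).
Hypothesis Hpsi : forall n, 1 <= n -> is_calA_lifting mul inv K A (psi n).
Hypothesis Halpha : forall n, 1 <= n -> is_calB mul e K (alpha n).

Lemma main_ind n : exists Q b, is_calA_lifting mul inv K A Q /\ is_calB mul e K b /\
  (forall g h, circ mul psi alpha n g h = dot Q b g h) /\
  (forall x, cK (Q x) (xi mul e psi n x)).
Proof.
  induction n as [|n IH].
  - exists (fun _ => e), (fun _ _ => e). split; [|split; [|split]].
    + split; [|split]; intros; [apply A_e| reflexivity |rewrite mul_e_l; reflexivity].
    + split; [|split; [|split]]; intros; auto using K_e; rewrite mul_e_l; auto.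
    + intros g h. unfold dot. simpl. gnorm. auto.
    + intro x. rewrite xi_X. simpl. unfold fzero. reflexivity.
  - destruct IH as [Q [b [HQ [Hb [Hc Hx]]]]].
    assert (Hp : is_calA_lifting mul inv K A (psi (S n))) by (apply Hpsi; lia).
    assert (Ha : is_calB mul e K (alpha (S n))) by (apply Halpha; lia).
    exists (Q' Q (psi (S n))), (b' Q b (psi (S n)) (alpha (S n))).
    split; [|split; [|split]].
    + apply Q'_calA; auto.
    + apply b'_calB; auto.
    + intros g h. assert (Hf : circ mul psi alpha n = dot Q b).
      { extensionality u; extensionality v; apply Hc. }
      cbn [circ]. rewrite Hf. apply compose; auto.
    + intro x. rewrite (xi_step psi Hpsi n x). unfold Q'.
      rewrite <- (Hx x), <- (Hx (psi (S n) x)).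
      assert (A (psi (S n) x)) by (apply (fA (psi (S n))); auto).
      assert (forall z, A (Q z)) by (intro; apply (fA Q); auto).
      aperm.
Qed.

Lemma main_all n :
    is_group_op (circ mul psi alpha n) /\
    (forall q : T -> T, lifts mul inv K A q (xi mul e psi n) ->
       exists beta, is_calB mul e K beta /\
         forall g h, circ mul psi alpha n g h =
           mul (mul (mul (mul g (q g)) h) (inv (q g))) (beta g h)) /\
    bi_skew_brace mul (circ mul psi alpha n).
Proof.
  destruct (main_ind n) as [Q [b [HQ [Hb [Hc Hx]]]]].
  assert (Hf : circ mul psi alpha n = dot Q b).
  { extensionality u; extensionality v; apply Hc. }
  rewrite Hf. split; [|split].
  - exists e, (dinv Q b). apply dot_group; auto.
  - intros q [Hq1 Hq2]. exists b. split; auto. intros g h. unfold dot.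
    rewrite !(assoc g). rewrite (conj_cK (Q g) (q g) h); auto.
    rewrite (Hx g). symmetry. auto.
  - apply bsb; auto.
Qed.
End Main.

End Grp.

Theorem mainTheorem6
  (T : Type) (mul : T -> T -> T) (e : T) (inv : T -> T)
  (K A : T -> Prop)
  (psi : nat -> T -> T) (alpha : nat -> T -> T -> T)
  (HG : is_group mul e inv)
  (HK : is_subgroup mul e inv K)
  (HKZ : central mul K)
  (HA : is_subgroup mul e inv A)
  (HKA : forall x, K x -> A x)
  (HAab : abelian_mod mul inv K A)
  (Hpsi : forall n, 1 <= n -> is_calA_lifting mul inv K A (psi n))
  (Halpha : forall n, 1 <= n -> is_calB mul e K (alpha n)) :
  forall n, 1 <= n ->
    is_group_op (circ mul psi alpha n) /\
    (forall q : T -> T, lifts mul inv K A q (xi mul e psi n) ->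
       exists beta, is_calB mul e K beta /\
         forall g h, circ mul psi alpha n g h =
           mul (mul (mul (mul g (q g)) h) (inv (q g))) (beta g h)) /\
    bi_skew_brace mul (circ mul psi alpha n).
Proof.
  intros n _. eapply main_all; eauto.
Qed.
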